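(* Let $V$ be a vector configuration with $\operatorname{codeg}^*(V)\ge1$. Then there is a totally cyclic subconfiguration $W\subseteq V$ with $\operatorname{codeg}^*(W)=\operatorname{codeg}^*(V)$.
   Context: A vector configuration is a finite family (repetitions allowed) of vectors in $\mathbb{R}^r$; a subconfiguration is a subfamily; cardinalities count multiplicities. A configuration $W$ is totally cyclic if there exist real numbers $\lambda_w>0$, $w\in W$, with $\sum_{w\in W}\lambda_w w=0$. For a nonzero linear functional $f$ on $\mathbb{R}^r$ let $H=\{f=0\}$, $\overline{H}^-=\{f\le0\}$. The dual codegree is $\operatorname{codeg}^*(X)=\min_H|\overline{H}^-\cap X|$, the minimum over all such oriented linear hyperplanes $H$. *)

(* Defs.v *)
From HB Require Import structures.
From mathcomp Require Import all_boot all_order all_algebra.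
From mathcomp Require Import reals.
Set Implicit Arguments. Unset Strict Implicit. Unset Printing Implicit Defensive.
Import Order.TTheory GRing.Theory Num.Theory.
Local Open Scope ring_scope.

(* A vector configuration in R^r with n members (repetitions allowed) is a
   family V : 'I_n -> 'rV[R]_r; a subconfiguration is given by a set of
   indices S : {set 'I_n}. *)

Definition lfun (R : realType) (r : nat) (c x : 'rV[R]_r) : R :=
  \sum_(j < r) c ord0 j * x ord0 j.

(* |H^- closed ∩ X| for H = {f = 0}, f given by c, X = subconfiguration S *)
Definition neg_count (R : realType) (r n : nat) (V : 'I_n -> 'rV[R]_r)
    (S : {set 'I_n}) (c : 'rV[R]_r) : nat :=
  #|[set i in S | lfun c (V i) <= 0]|.

Definition dual_codeg_is (R : realType) (r n : nat) (V : 'I_n -> 'rV[R]_r)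
    (S : {set 'I_n}) (k : nat) : Prop :=
  (exists c : 'rV[R]_r, c != 0 /\ neg_count V S c = k) /\
  (forall c : 'rV[R]_r, c != 0 -> (k <= neg_count V S c)%N).

Definition totally_cyclic (R : realType) (r n : nat) (V : 'I_n -> 'rV[R]_r)
    (S : {set 'I_n}) : Prop :=
  exists lambda : 'I_n -> R,
    (forall i, i \in S -> 0 < lambda i) /\ \sum_(i in S) lambda i *: V i = 0.

(* Main.v *)
Require Import Defs.
From HB Require Import structures.
From mathcomp Require Import all_boot all_order all_algebra.
From mathcomp Require Import reals boolp.
From mathcomp Require Import ring lra.
Set Implicit Arguments. Unset Strict Implicit. Unset Printing Implicit Defensive.
Import Order.TTheory GRing.Theory Num.Theory.
Local Open Scope ring_scope.

Section L.
Variables (R : realType) (r : nat).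
Implicit Types (c x y : 'rV[R]_r).

Lemma lfunDr c x y : lfun c (x + y) = lfun c x + lfun c y.
Proof. by rewrite /lfun -big_split /=; apply: eq_bigr => j _; rewrite mxE mulrDr. Qed.
Lemma lfunZr c a x : lfun c (a *: x) = a * lfun c x.
Proof. by rewrite /lfun big_distrr /=; apply: eq_bigr => j _; rewrite mxE mulrCA. Qed.
Lemma lfunNr c x : lfun c (- x) = - lfun c x.
Proof. by rewrite -scaleN1r lfunZr mulN1r. Qed.
Lemma lfunBr c x y : lfun c (x - y) = lfun c x - lfun c y.
Proof. by rewrite lfunDr lfunNr. Qed.
Lemma lfunC c x : lfun c x = lfun x c.
Proof. by rewrite /lfun; apply: eq_bigr => j _; rewrite mulrC. Qed.
Lemma lfunDl c x y : lfun (x + y) c = lfun x c + lfun y c.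
Proof. by rewrite !(lfunC _ c) lfunDr. Qed.
Lemma lfunZl c a x : lfun (a *: x) c = a * lfun x c.
Proof. by rewrite !(lfunC _ c) lfunZr. Qed.
Lemma lfunBl c x y : lfun (x - y) c = lfun x c - lfun y c.
Proof. by rewrite !(lfunC _ c) lfunBr. Qed.
Lemma lfun0r c : lfun c 0 = 0.
Proof. by rewrite -(scale0r 0) lfunZr mul0r. Qed.
Lemma lfun_sumr c I (s : seq I) (P : pred I) (F : I -> 'rV[R]_r) :
  lfun c (\sum_(i <- s | P i) F i) = \sum_(i <- s | P i) lfun c (F i).
Proof.
elim/big_rec2: _ => [|i y1 y2 _ <-]; first exact: lfun0r.
by rewrite lfunDr.
Qed.
Lemma lfun_suml c I (s : seq I) (P : pred I) (F : I -> 'rV[R]_r) :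
  lfun (\sum_(i <- s | P i) F i) c = \sum_(i <- s | P i) lfun (F i) c.
Proof. by rewrite lfunC lfun_sumr; apply: eq_bigr => i _; rewrite lfunC. Qed.
Lemma lfun_self_gt0 x : x != 0 -> 0 < lfun x x.
Proof.
move=> nz; have [j xj] : exists j, x ord0 j != 0.
  apply/existsP; apply: contraR nz; rewrite negb_exists => /forallP H.
  by apply/eqP/rowP => j; rewrite mxE; have := H j; rewrite negbK => /eqP.
rewrite /lfun (bigD1 j) //=; apply: ltr_pwDl.
  by rewrite lt0r mulf_neq0 // -expr2 sqr_ge0.
by apply: sumr_ge0 => i _; rewrite -expr2 sqr_ge0.
Qed.
End L.
Lemma farkas (R : realType) (r m : nat) (a : 'I_m -> 'rV[R]_r) (b : 'rV[R]_r) :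
 (exists lam : nat -> R, (forall i, 0 <= lam i) /\ b = \sum_(i < m) lam i *: a i) \/
 (exists y, (forall i, 0 <= lfun y (a i)) /\ lfun y b < 0).
Proof.
elim: m a b => [|m IH] a b.
  have [->|nz] := eqVneq b 0.
    by left; exists (fun _ => 0); split => [//|]; rewrite big_ord0.
  right; exists (- b); split; first by case.
  by rewrite lfunC lfunNr oppr_lt0 lfun_self_gt0.
have [[lam [lam0 hb]]|[y [hy hyb]]] := IH (fun i => a (lift ord0 i)) b.
  left; exists (fun k => if k is k'.+1 then lam k' else 0); split.
    by case.
  by rewrite big_ord_recl /= scale0r add0r hb; by apply: eq_bigr => i _.
have [ha0|ha0] := leP 0 (lfun y (a ord0)).
  right; exists y; split => // i; by case: (unliftP ord0 i) => [j ->|->].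
set al := lfun y (a ord0); set be := lfun y b.
have [[mu [mu0 hb]]|[z [hz hzb]]] := IH
   (fun i => al *: a (lift ord0 i) - lfun y (a (lift ord0 i)) *: a ord0)
   (al *: b - be *: a ord0).
  left; set Y := \sum_(i < m) mu i * lfun y (a (lift ord0 i)).
  exists (fun k => if k is k'.+1 then mu k' else (be - Y) / al); split.
    case=> // /=; apply: mulr_le0; last by rewrite invr_le0 ltW.
    rewrite subr_le0; apply: le_trans (ltW hyb) _.
    by apply: sumr_ge0 => i _; apply: mulr_ge0.
  rewrite big_ord_recl /=.
  have al0 : al != 0 by rewrite ltr0_neq0.
  set S := \sum_(i < m) mu i *: a (lift ord0 i).
  have e1 : \sum_(i < m) mu i *: (al *: a (lift ord0 i) - lfun y (a (lift ord0 i)) *: a ord0)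
      = al *: S - Y *: a ord0.
    rewrite scaler_sumr scaler_suml -sumrB; apply: eq_bigr => i _.
    by rewrite scalerBr !scalerA mulrC.
  rewrite e1 in hb.
  apply: (@scalerI _ _ al al0).
  rewrite scalerDr scalerA mulrC divfK // scalerBl.
  move/eqP: hb; rewrite subr_eq => /eqP ->.
  by rewrite addrC addrA addrAC.
right; exists (al *: z - lfun z (a ord0) *: y); split.
  move=> i; case: (unliftP ord0 i) => [j ->|->].
    move: (hz j); rewrite lfunBr !lfunZr lfunBl !lfunZl.
    by rewrite (mulrC (lfun z _)).
  by rewrite lfunBl !lfunZl -/al mulrC subrr.
rewrite lfunBl !lfunZl; move: hzb; rewrite lfunBr !lfunZr.
by rewrite -/be (mulrC be).
Qed.
Lemma alt (R : realType) (r n : nat) (V : 'I_n -> 'rV[R]_r) (e : 'I_n) :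
  (exists lam : 'I_n -> R, (forall i, 0 <= lam i) /\ 0 < lam e /\
      \sum_i lam i *: V i = 0) \/
  (exists c, (forall i, 0 <= lfun c (V i)) /\ 0 < lfun c (V e)).
Proof.
have [[lam [lam0 hb]]|[y [hy hyb]]] := farkas V (- V e).
  left; exists (fun i => lam i + (i == e)%:R); split.
    by move=> i; rewrite addr_ge0 ?ler0n.
  split; first by rewrite eqxx ltr_pwDr ?ltr01.
  under eq_bigr do rewrite scalerDl.
  rewrite big_split /= -hb (bigD1 e) //= eqxx scale1r big1 ?addr0 ?addNr //.
  move=> i H; case: eqP => [E|_]; first by move/val_inj: E H => ->; rewrite eqxx.
  by rewrite scale0r.
right; exists y; split => //.
by move: hyb; rewrite lfunNr oppr_lt0.
Qed.
Theorem mainTheorem19 (R : realType) (r n : nat) (V : 'I_n -> 'rV[R]_r)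
    (k : nat) :
  dual_codeg_is V [set: 'I_n] k -> (1 <= k)%N ->
  exists W : {set 'I_n}, totally_cyclic V W /\ dual_codeg_is V W k.
Proof.
move=> [[c0 [c00 hc0]] hmin] _.
pose P e := exists lam : 'I_n -> R, (forall i, 0 <= lam i) /\ 0 < lam e /\
      \sum_i lam i *: V i = 0.
pose W := [set e | `[< P e >]].
have hch : forall e, exists p : ('I_n -> R) * 'rV[R]_r,
   (e \in W -> (forall i, 0 <= p.1 i) /\ 0 < p.1 e /\ \sum_i p.1 i *: V i = 0) /\
   (e \notin W -> (forall i, 0 <= lfun p.2 (V i)) /\ 0 < lfun p.2 (V e)).
  move=> e; case: (alt V e) => [hP|[c hc]].
    have eW : e \in W by rewrite inE; apply/asboolP.
    case: hP => lam hl; exists (lam, 0); split => // ; by rewrite eW.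
  have [eW|eW] := boolP (e \in W).
    move: eW; rewrite inE => /asboolP [lam hl].
    by exists (lam, c); split => //; rewrite inE; move/asboolP.
  by exists (fun _ => 0, c); split => //; rewrite eW.
have [p hp] := choice hch.
have F2 : forall e i, e \in W -> i \notin W -> (p e).1 i = 0.
  move=> e i eW iW; have [h0 [_ hs]] := (hp e).1 eW.
  apply/eqP; rewrite eq_le h0 andbT leNgt; apply/negP => hpos.
  have hP : P i by exists (p e).1.
  by move: iW; rewrite inE => /asboolPn.
pose LAM i := \sum_(e in W) (p e).1 i.
pose C := \sum_(e in ~: W) (p e).2.
have LAM0 : forall i, i \notin W -> LAM i = 0.
  by move=> i iW; apply: big1 => e eW; apply: F2.
have Cge0 : forall i, 0 <= lfun C (V i).
  move=> i; rewrite lfun_suml; apply: sumr_ge0 => e; rewrite inE => eW.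
  exact: ((hp e).2 eW).1.
have Cgt0 : forall i, i \notin W -> 0 < lfun C (V i).
  move=> i iW; rewrite lfun_suml (bigD1 i) /=; last by rewrite inE.
  have h1 := ((hp i).2 iW).2.
  have h2 : 0 <= \sum_(i0 in ~: W | i0 != i) lfun (p i0).2 (V i).
    apply: sumr_ge0 => e; rewrite inE => /andP [eW _].
    exact: ((hp e).2 eW).1.
  lra.
have key : forall f : 'rV[R]_r, f != 0 -> (k <= neg_count V W f)%N.
  move=> f f0.
  pose S := \sum_(i in ~: W) `|lfun f (V i)| / lfun C (V i).
  pose T := 1 + S.
  have Sge0 : 0 <= S.
    apply: sumr_ge0 => i; rewrite inE => iW.
    by rewrite divr_ge0 // ltW // Cgt0.
  have T1 : 1 <= T by rewrite /T lerDl.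
  have hT : T = 1 + S by [].
  have Ti : forall i, i \notin W -> `|lfun f (V i)| / lfun C (V i) <= S.
    move=> i iW; rewrite /S (bigD1 i) /=; last by rewrite inE.
    rewrite lerDl; apply: sumr_ge0 => j; rewrite inE => /andP [jW _].
    by rewrite divr_ge0 // ltW // Cgt0.
  have sub : forall t, T <= t ->
      [set i in [set: 'I_n] | lfun (t *: C + f) (V i) <= 0] \subset
      [set i in W | lfun f (V i) <= 0].
    move=> t Tt; apply/subsetP => i; rewrite !inE /= lfunDl lfunZl => hi.
    have [iW|iW] := boolP (i \in W).
      have : 0 <= t * lfun C (V i) by apply: mulr_ge0; [lra | exact: Cge0].
      move=> h; move: iW; rewrite inE => -> /=; lra.
    exfalso.
    have cpos := Cgt0 i iW; have hq := Ti i iW.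
    have qc : `|lfun f (V i)| / lfun C (V i) * lfun C (V i) = `|lfun f (V i)|.
      by rewrite divfK // gt_eqF.
    have h1 : (1 + `|lfun f (V i)| / lfun C (V i)) * lfun C (V i) <= t * lfun C (V i).
      by apply: ler_wpM2r; [exact: ltW | lra].
    have h2 := lerNnormlW (le_refl `|lfun f (V i)|).
    move: h1; rewrite mulrDl mul1r qc => h1; suff : (0 < 0 :> R) by rewrite ltxx. lra.
  have gen : forall t, T <= t -> t *: C + f != 0 -> (k <= neg_count V W f)%N.
    move=> t Tt nz; apply: leq_trans (hmin _ nz) _.
    exact: subset_leq_card (sub t Tt).
  have [hg|hg] := eqVneq (T *: C + f) 0; last by apply: (gen T) => //.
  apply: (gen (T + 1)); first lra.
  rewrite scalerDl scale1r addrAC hg add0r.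
  apply: contra f0 => /eqP C0; apply/eqP.
  by move: hg; rewrite C0 scaler0 add0r.
exists W; split.
  exists LAM; split.
    move=> i iW; rewrite /LAM (bigD1 i) //=; apply: ltr_pwDl.
      by have [_ [h _]] := (hp i).1 iW.
    by apply: sumr_ge0 => e /andP [eW _]; have [h _] := (hp e).1 eW.
  rewrite big_mkcond /=.
  transitivity (\sum_i LAM i *: V i).
    apply: eq_bigr => i _; case: ifP => // /negbT iW.
    by rewrite LAM0 // scale0r.
  under eq_bigr do rewrite /LAM scaler_suml.
  rewrite exchange_big /=; apply: big1 => e eW.
  by have [_ [_ ->]] := (hp e).1 eW.
split; last exact: key.
exists c0; split => //; apply/eqP; rewrite eqn_leq key // andbT -hc0.
by apply: subset_leq_card; apply/subsetP => i; rewrite !inE => /andP [_ ->].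
Qed.
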